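(* Let $n\in\mathbb{Z}^+$ and let $P_n$ denote the $n$-th Pell number, defined by $P_0=0$, $P_1=1$ and $P_n=2P_{n-1}+P_{n-2}$ for $n>1$. Then $$P_n = \left((3^n+1)^{n-1}\bmod (9^n-2)\right)\bmod (3^n-1).$$
   Context: For integers, $u\bmod m$ denotes the least non-negative remainder of $u$ upon division by $m>0$. *)

(* Defs.v *)
From mathcomp Require Import all_boot.

Fixpoint pell (n : nat) : nat :=
  match n with
  | 0 => 0
  | 1 => 1
  | S ((S m) as k) => 2 * pell k + pell m
  end.

(* Main.v *)
Require Import Defs.
From mathcomp Require Import all_boot.
From mathcomp Require Import zify.

Fixpoint AB (m : nat) : nat * nat :=
  match m with
  | 0 => (1, 0)
  | S k => let (a, b) := AB k in (a + 2 * b, a + b)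
  end.

Lemma pellSS m : pell m.+2 = 2 * pell m.+1 + pell m.
Proof. by []. Qed.

Lemma AB_pell m : (AB m).2 = pell m /\ (AB m).1 + (AB m).2 = pell m.+1.
Proof.
elim: m => [|m [IH1 IH2]]; first done.
rewrite [AB _]/= pellSS.
case: (AB m) IH1 IH2 => a b /= -> IH2.
split; lia.
Qed.

Lemma pell_le m : pell m.+1 <= 3 ^ m /\ pell m <= pell m.+1.
Proof.
elim: m => [|m [IH1 IH2]] //.
rewrite pellSS expnS. lia.
Qed.

Lemma AB_cong x M n : x ^ 2 = M + 2 ->
  exists q, (x + 1) ^ n = (AB n).1 + (AB n).2 * x + q * M.
Proof.
move=> hx; elim: n => [|m [q IH]]; first by exists 0; rewrite /=; lia.
rewrite /= expnS IH.
case: (AB m) => a b /=.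
exists ((x + 1) * q + b).
rewrite expnS expn1 in hx.
nia.
Qed.

Theorem theorem4p1 (n : nat) (hn : 0 < n) :
  pell n = ((3 ^ n + 1) ^ (n - 1) %% (9 ^ n - 2)) %% (3 ^ n - 1).
Proof.
case: n hn => // m _.
rewrite subSS subn0.
set x := 3 ^ m.+1.
have h9 : 9 ^ m.+1 = x ^ 2 by rewrite /x -expnM mulnC expnM.
have hx3 : x = 3 * 3 ^ m by rewrite /x expnS.
have h1 : 1 <= 3 ^ m by rewrite expn_gt0.
have hx2 : x ^ 2 = (9 ^ m.+1 - 2) + 2.
  rewrite h9 subnK // hx3; nia.
have [q ->] := (@AB_cong _ _ m hx2).
have [hB hAB] := AB_pell m.
have [hp1 hp2] := pell_le m.
set A := (AB m).1 in hAB *; set B := (AB m).2 in hB hAB *.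
set y := 3 ^ m in hx3 h1 hp1.
have hA : A <= y by lia.
have hBy : B <= y by lia.
have hBx : B * x <= y * x by rewrite leq_mul2r hBy orbT.
have hxx : x ^ 2 = 3 * (y * x) by rewrite expnS expn1 {1}hx3 mulnA.
have hyx : 3 * y <= y * x by rewrite hx3 mulnCA leq_mul2l leq_pmulr ?orbT.
rewrite addnC modnMDl (@modn_small (A + B * x)); last first.
  rewrite h9 hxx. lia.
have -> : A + B * x = B * (x - 1) + (A + B).
  have : B <= B * x by rewrite leq_pmulr // hx3 muln_gt0.
  rewrite mulnBr muln1; lia.
rewrite modnMDl modn_small hAB //.
rewrite hx3. lia.
Qed.
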